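(* Let $X$ and $Y$ be random variables on finite alphabets with joint distribution $p(x_i,y_j)$, marginals $p(x_i)$, $p(y_j)$, and conditional probabilities $p(x_i\mid y_j)$ (defined whenever $p(y_j)>0$). For every $0<\varpi\le 2$, $$\Phi_\varpi(X\|Y)=L(\varpi,X)-L(\varpi,X\mid Y)\ \ge 0 .$$
   Context: For a discrete random variable $X$ with distribution $\{p(x_1),\dots,p(x_n)\}$ the message importance measure (MIM) is $L(\varpi,X)=\sum_i p(x_i)e^{\varpi(1-p(x_i))}$. For a pair $(X,Y)$ the conditional message importance measure (CMIM) is $L(\varpi,X\mid Y)=\sum_{j:\,p(y_j)>0} p(y_j)\sum_i p(x_i\mid y_j)e^{\varpi(1-p(x_i\mid y_j))}$. The message importance loss is $\Phi_\varpi(X\|Y)=L(\varpi,X)-L(\varpi,X\mid Y)$. *)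

(* Defs.v *)
From Stdlib Require Import Reals.
Open Scope R_scope.

Fixpoint rsum (n : nat) (f : nat -> R) : R :=
  match n with
  | O => 0
  | S k => rsum k f + f k
  end.

(* A joint distribution of (X,Y) on alphabets {x_0..x_{n-1}} x {y_0..y_{m-1}},
   given by p i j = p(x_i, y_j). *)
Definition is_joint_dist (n m : nat) (p : nat -> nat -> R) : Prop :=
  (forall i j, (i < n)%nat -> (j < m)%nat -> 0 <= p i j) /\
  rsum n (fun i => rsum m (fun j => p i j)) = 1.

Definition px (m : nat) (p : nat -> nat -> R) (i : nat) : R := rsum m (fun j => p i j).
Definition py (n : nat) (p : nat -> nat -> R) (j : nat) : R := rsum n (fun i => p i j).

(* conditional probability p(x_i | y_j), used only when p(y_j) > 0 *)
Definition pcond (n : nat) (p : nat -> nat -> R) (i j : nat) : R := p i j / py n p j.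

Definition MIM (w : R) (n : nat) (q : nat -> R) : R :=
  rsum n (fun i => q i * exp (w * (1 - q i))).

Definition CMIM (w : R) (n m : nat) (p : nat -> nat -> R) : R :=
  rsum m (fun j =>
    if Rlt_dec 0 (py n p j)
    then py n p j * MIM w n (fun i => pcond n p i j)
    else 0).

Definition Phi (w : R) (n m : nat) (p : nat -> nat -> R) : R :=
  MIM w n (px m p) - CMIM w n m p.

(* Main.v *)
Require Import Defs.
From Stdlib Require Import Reals Lra Psatz.
From Coquelicot Require Import Coquelicot.
Open Scope R_scope.
Lemma expc_le (c : R) : (1 - c) * exp c <= 1.
Proof.
  pose proof (exp_ineq1_le (- c)) as H.
  pose proof (exp_pos c).
  assert (exp (-c) * exp c = 1) by (rewrite <- exp_plus; replace (-c + c) with 0 by ring; apply exp_0).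
  nra.
Qed.

Lemma E2 (x : R) : 0 <= x -> (2 - x) * exp x <= 2 + x.
Proof.
  intros Hx. destruct (Req_dec x 0) as [->|Hne].
  { rewrite exp_0; lra. }
  destruct (MVT_cor2 (fun t => (2 - t) * exp t - (2 + t))
             (fun t => (1 - t) * exp t - 1) 0 x) as [c [Hc Hc2]].
  - lra.
  - intros c _. apply is_derive_Reals. auto_derive; auto. ring.
  - rewrite exp_0 in Hc. pose proof (expc_le c). nra.
Qed.

Lemma E3 (x : R) : x <= 0 -> exp x <= 1 + x + x * x / 2.
Proof.
  intros Hx. destruct (Req_dec x 0) as [->|Hne].
  { rewrite exp_0; lra. }
  destruct (MVT_cor2 (fun t => exp t - 1 - t - t * t / 2)
             (fun t => exp t - 1 - t) x 0) as [c [Hc Hc2]].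
  - lra.
  - intros c _. apply is_derive_Reals. auto_derive; auto. field.
  - rewrite exp_0 in Hc. pose proof (exp_ineq1_le c). nra.
Qed.
Lemma core (w a q : R) : 0 < w <= 2 -> 0 <= a <= 1 -> 0 <= q <= 1 ->
  q * exp (w * (a - q)) <= q + w * a * (a - q).
Proof.
  intros Hw Ha Hq.
  destruct (Req_dec q 0) as [->|Hq0].
  { nra. }
  set (d := a - q). set (x := w * d).
  set (K := exp x - 1 - x).
  assert (HK : 0 <= K) by (unfold K; pose proof (exp_ineq1_le x); lra).
  assert (Hkey : q * w * K <= x * x).
  { destruct (Rle_dec 0 d) as [Hd|Hd].
    - assert (0 <= x) by (unfold x; nra).
      pose proof (E2 x H).
      assert ((2 - x) * K <= x * x) by (unfold K; nra).
      assert (q * w <= 2 - x) by (unfold x, d; nra).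
      nra.
    - assert (x <= 0) by (unfold x; nra).
      pose proof (E3 x H).
      assert (K <= x * x / 2) by (unfold K; lra).
      assert (q * w <= 2) by nra.
      nra. }
  assert (HqK : q * K <= w * d * d).
  { unfold x in Hkey.
    apply Rmult_le_reg_l with w. lra.
    replace (w * (q * K)) with (q * w * K) by ring.
    replace (w * (w * d * d)) with (w * d * (w * d)) by ring. exact Hkey. }
  replace (exp (w * (a - q))) with (1 + x + K) by (unfold K, x, d; ring).
  assert (q * (1 + x + K) = q + w * d * q + q * K) by (unfold x; ring).
  assert (w * a * (a - q) = w * d * q + w * d * d) by (unfold d; ring).
  assert (exp x = 1 + x + K) by (unfold K; ring). rewrite H1. unfold d in *. lra.
Qed.

Lemma tangent (w a q : R) : 0 < w <= 2 -> 0 <= a <= 1 -> 0 <= q <= 1 ->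
  q * exp (w * (1 - q)) <= a * exp (w * (1 - a)) + exp (w * (1 - a)) * (1 - w * a) * (q - a).
Proof.
  intros Hw Ha Hq.
  replace (exp (w * (1 - q))) with (exp (w * (1 - a)) * exp (w * (a - q)))
    by (rewrite <- exp_plus; f_equal; ring).
  pose proof (core w a q Hw Ha Hq).
  pose proof (exp_pos (w * (1 - a))).
  nra.
Qed.
Lemma rsum_ext n f g : (forall k, (k < n)%nat -> f k = g k) -> rsum n f = rsum n g.
Proof. induction n; simpl; intros H; auto. rewrite IHn, H; auto. Qed.
Lemma rsum_le n f g : (forall k, (k < n)%nat -> f k <= g k) -> rsum n f <= rsum n g.
Proof. induction n; simpl; intros H; [lra|]. pose proof (H n (Nat.lt_succ_diag_r n)). pose proof (IHn (fun k Hk => H k (Nat.lt_lt_succ_r _ _ Hk))). lra. Qed.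
Lemma rsum_plus n f g : rsum n (fun k => f k + g k) = rsum n f + rsum n g.
Proof. induction n; simpl; [lra|]. rewrite IHn; ring. Qed.
Lemma rsum_minus n f g : rsum n (fun k => f k - g k) = rsum n f - rsum n g.
Proof. induction n; simpl; [lra|]. rewrite IHn; ring. Qed.
Lemma rsum_scal n c f : rsum n (fun k => c * f k) = c * rsum n f.
Proof. induction n; simpl; [lra|]. rewrite IHn; ring. Qed.
Lemma rsum_zero n : rsum n (fun _ => 0) = 0.
Proof. induction n; simpl; [lra|]. rewrite IHn; ring. Qed.
Lemma rsum_swap n m f : rsum n (fun i => rsum m (fun j => f i j)) = rsum m (fun j => rsum n (fun i => f i j)).
Proof. induction n; simpl. { symmetry; apply rsum_zero. } rewrite IHn, <- rsum_plus. reflexivity. Qed.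
Lemma rsum_nonneg n f : (forall k, (k < n)%nat -> 0 <= f k) -> 0 <= rsum n f.
Proof. intros H. rewrite <- (rsum_zero n). apply rsum_le. auto. Qed.
Lemma elem_le_rsum n f k : (forall k, (k < n)%nat -> 0 <= f k) -> (k < n)%nat -> f k <= rsum n f.
Proof.
  induction n; simpl; intros H Hk; [lia|].
  assert (H' : forall k, (k < n)%nat -> 0 <= f k) by (intros; apply H; lia).
  destruct (Nat.eq_dec k n) as [->|Hne].
  - pose proof (rsum_nonneg n f H'). lra.
  - pose proof (IHn H' ltac:(lia)). pose proof (H n ltac:(lia)). lra.
Qed.

Theorem mainTheorem1 (n m : nat) (p : nat -> nat -> R) (w : R) :
  is_joint_dist n m p -> 0 < w <= 2 -> 0 <= Phi w n m p.
Proof.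
  intros [Hnn Hsum] Hw.
  set (f := fun a => a * exp (w * (1 - a))).
  set (g := fun a => exp (w * (1 - a)) * (1 - w * a)).
  set (T := fun i j => if Rlt_dec 0 (py n p j) then py n p j * (pcond n p i j * exp (w * (1 - pcond n p i j))) else 0).
  assert (HC : CMIM w n m p = rsum n (fun i => rsum m (fun j => T i j))).
  { rewrite rsum_swap. unfold CMIM. apply rsum_ext. intros j Hj. unfold T.
    destruct (Rlt_dec 0 (py n p j)).
    - unfold MIM. rewrite <- rsum_scal. reflexivity.
    - symmetry; apply rsum_zero. }
  assert (Hpy1 : rsum m (fun j => py n p j) = 1).
  { unfold py. rewrite <- rsum_swap. exact Hsum. }
  unfold Phi. rewrite HC. unfold MIM. rewrite <- rsum_minus.
  apply rsum_nonneg. intros i Hi.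
  set (a := px m p i).
  assert (Ha : 0 <= a <= 1).
  { split.
    - unfold a, px. apply rsum_nonneg. intros; apply Hnn; auto.
    - rewrite <- Hsum. fold (px m p). unfold a.
      apply (elem_le_rsum n (px m p) i); auto.
      intros k Hk. unfold px. apply rsum_nonneg. intros; apply Hnn; auto. }
  assert (HTU : rsum m (fun j => T i j) <=
     rsum m (fun j => f a * py n p j + (g a * p i j - (g a * a) * py n p j))).
  { apply rsum_le. intros j Hj.
    assert (Hpyge : 0 <= py n p j) by (unfold py; apply rsum_nonneg; intros; apply Hnn; auto).
    assert (Hple : p i j <= py n p j).
    { unfold py. apply (elem_le_rsum n (fun k => p k j) i); [intros; apply Hnn; auto | exact Hi]. }
    pose proof (Hnn i j Hi Hj) as Hp0.
    unfold T. destruct (Rlt_dec 0 (py n p j)) as [Hpos|Hpos].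
    - set (q := pcond n p i j).
      assert (Hqdef : py n p j * q = p i j) by (unfold q, pcond; field; lra).
      assert (Hq : 0 <= q <= 1).
      { unfold q, pcond. split.
        - apply Rmult_le_pos; auto. left; apply Rinv_0_lt_compat; auto.
        - apply Rmult_le_reg_l with (py n p j); auto.
          replace (py n p j * (p i j / py n p j)) with (p i j) by (field; lra). lra. }
      pose proof (tangent w a q Hw Ha Hq) as Ht.
      fold (f q) in Ht. fold (f a) (g a) in Ht.
      assert (py n p j * (q * exp (w * (1 - q))) <= py n p j * (f a + g a * (q - a))).
      { apply Rmult_le_compat_l; [lra|]. unfold f in *. lra. }
      replace (f a * py n p j + (g a * p i j - g a * a * py n p j))
        with (py n p j * (f a + g a * (q - a))) by (rewrite <- Hqdef; ring).
      exact H.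
    - assert (py n p j = 0) by lra.
      assert (p i j = 0) by lra.
      rewrite H, H0. lra. }
  rewrite rsum_plus, rsum_minus, !rsum_scal in HTU.
  assert (E1 : rsum m (py n p) = 1) by exact Hpy1.
  assert (E2' : rsum m (p i) = a) by reflexivity.
  rewrite E1, E2' in HTU.
  fold (px m p i) in HTU. fold a in HTU.
  unfold f in HTU. lra.
Qed.
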